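(* Let $T_1,T_2$ be tables joined on column $J$ with frequencies $a_v,b_v$ ($v\in\mathcal U$) such that $\gamma_{1,1}=\sum_v a_vb_v>0$, and let $\epsilon_1,\epsilon_2\in(0,1]$. Among all UBS parameters $(p_1,q_1),(p_2,q_2)\in(0,1]^2$ with $p_1q_1=\epsilon_1$ and $p_2q_2=\epsilon_2$, the variance of $\hat J_{\mathrm{count}}=\frac{1}{\min\{p_1,p_2\}q_1q_2}|S_1\bowtie_J S_2|$ (with $S_i=\mathrm{UBS}_{p_i,q_i}(T_i,J)$) is minimized by $$p_1=p_2=p:=\min\Big\{1,\max\Big\{\epsilon_1,\epsilon_2,\sqrt{\frac{\epsilon_1\epsilon_2(\gamma_{2,2}-\gamma_{1,2}-\gamma_{2,1}+\gamma_{1,1})}{\gamma_{1,1}}}\Big\}\Big\},\qquad q_1=\epsilon_1/p,\ q_2=\epsilon_2/p,$$ where $\gamma_{i,j}=\sum_{v\in\mathcal U}a_v^ib_v^j$.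
   Context: $T_1,T_2$ are finite multisets of tuples with a join attribute $J$ taking values in a finite set $\mathcal U$; $a_v$ (resp. $b_v$) is the number of tuples of $T_1$ (resp. $T_2$) with $J$-value $v$. $S_1\bowtie_J S_2$ is the set of pairs $(t_1,t_2)\in S_1\times S_2$ with $t_1.J=t_2.J$. $\mathrm{UBS}_{p,q}(T,J)$: given a hash function $h:\mathcal U\to[0,1]$, each tuple $t\in T$ with $h(t.J)<p$ is included independently with probability $q$; others are excluded. The values $h(v)$ are independent uniform on $[0,1]$, the same $h$ is used for both tables, and the Bernoulli coins are independent across all tuples and independent of $h$. *)

(* Defs.v *)
From HB Require Import structures.
From mathcomp Require Import all_boot all_order all_algebra.
From mathcomp Require Import all_classical all_reals all_analysis.
Unset Printing Implicit Defensive.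
Import Order.TTheory GRing.Theory Num.Theory.
Local Open Scope ring_scope.

(* The join-value universe U is modelled as 'I_n.  A table T with
   frequencies a : 'I_n -> nat is modelled by its tuples, indexed by
   pairs (v, i) with i < a v; the J-value of tuple (v,i) is v. *)
Definition tuples {n : nat} (a : 'I_n -> nat) : finType := {v : 'I_n & 'I_(a v)}.

Definition bweight {R : realType} (T : finType) (q : R) (c : {ffun T -> bool}) : R :=
  \prod_(t : T) (if c t then q else 1 - q).

Definition coinE {R : realType} (T : finType) (q : R) (F : {ffun T -> bool} -> R) : R :=
  \sum_(c : {ffun T -> bool}) bweight T q c * F c.

(* Expectation over a hash h with h(0),...,h(n-1) i.i.d. uniform on [0,1]
   (iterated Lebesgue integral over [0,1]^n). *)
Fixpoint hashE {R : realType} (n : nat) (F : (nat -> R) -> R) : R :=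
  match n with
  | 0 => F (fun _ => 0)
  | m.+1 => Rintegral (@lebesgue_measure R) `[0%R, 1%R]%classic
              (fun x => hashE m (fun h => F (fun k => if k == m then x else h k)))
  end.

Definition ubs {R : realType} {n : nat} (a : 'I_n -> nat) (p : R) (h : nat -> R)
  (c : {ffun tuples a -> bool}) : {set tuples a} :=
  [set t | (h (val (tag t)) < p) && c t].

Definition joinsize {n : nat} (a b : 'I_n -> nat)
  (S1 : {set tuples a}) (S2 : {set tuples b}) : nat :=
  #|[set tt : tuples a * tuples b |
      [&& tt.1 \in S1, tt.2 \in S2 & tag tt.1 == tag tt.2]]|.

Definition Jcount {R : realType} {n : nat} (a b : 'I_n -> nat) (p1 q1 p2 q2 : R)
  (h : nat -> R) (c1 : {ffun tuples a -> bool}) (c2 : {ffun tuples b -> bool}) : R :=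
  (joinsize a b (ubs a p1 h c1) (ubs b p2 h c2))%:R / (Num.min p1 p2 * q1 * q2).

Definition ubsE {R : realType} {n : nat} (a b : 'I_n -> nat) (q1 q2 : R)
  (G : (nat -> R) -> {ffun tuples a -> bool} -> {ffun tuples b -> bool} -> R) : R :=
  hashE n (fun h => coinE (tuples a) q1 (fun c1 => coinE (tuples b) q2 (fun c2 => G h c1 c2))).

Definition var_Jcount {R : realType} {n : nat} (a b : 'I_n -> nat) (p1 q1 p2 q2 : R) : R :=
  ubsE a b q1 q2 (fun h c1 c2 => (Jcount a b p1 q1 p2 q2 h c1 c2) ^+ 2)
  - (ubsE a b q1 q2 (fun h c1 c2 => Jcount a b p1 q1 p2 q2 h c1 c2)) ^+ 2.

Definition gamma {R : realType} {n : nat} (a b : 'I_n -> nat) (i j : nat) : R :=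
  \sum_(v < n) ((a v)%:R ^+ i * (b v)%:R ^+ j).

Definition popt {R : realType} {n : nat} (a b : 'I_n -> nat) (e1 e2 : R) : R :=
  Num.min 1 (Num.max e1 (Num.max e2
    (Num.sqrt (e1 * e2 * (gamma a b 2 2 - gamma a b 1 2 - gamma a b 2 1
                          + gamma a b 1 1) / gamma a b 1 1)))).

(* Main.v *)
Require Import Defs.
From HB Require Import structures.
From mathcomp Require Import all_boot all_order all_algebra.
From mathcomp Require Import all_classical all_reals all_analysis.
From mathcomp Require Import measurable_realfun ring lra.
Import Order.TTheory GRing.Theory Num.Theory.
Local Open Scope ring_scope.


Section Aux.
Variable R : realType.

Fixpoint DE (p : R) (n : nat) (g : (nat -> bool) -> R) : R :=
  if n is m.+1 then
    p * DE p m (fun t => g (fun k => if k == m then true else t k))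
    + (1 - p) * DE p m (fun t => g (fun k => if k == m then false else t k))
  else g (fun _ => 0 < p).

Lemma DE_ext p n g1 g2 : (forall t, g1 t = g2 t) -> DE p n g1 = DE p n g2.
Proof.
elim: n g1 g2 => [|n IH] g1 g2 e /=; first exact: e.
by congr (_ * _ + _ * _); apply: IH => t; exact: e.
Qed.

Lemma DE_add p n g1 g2 : DE p n (fun t => g1 t + g2 t) = DE p n g1 + DE p n g2.
Proof.
elim: n g1 g2 => [|n IH] g1 g2 //=.
rewrite (IH (fun t => g1 (fun k => if k == n then true else t k))).
rewrite (IH (fun t => g1 (fun k => if k == n then false else t k))).
ring.
Qed.

Lemma DE_scale p n c g : DE p n (fun t => c * g t) = c * DE p n g.
Proof.
elim: n g => [|n IH] g //=.
rewrite (IH (fun t => g (fun k => if k == n then true else t k))).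
rewrite (IH (fun t => g (fun k => if k == n then false else t k))).
ring.
Qed.

Lemma DE_cst p n c : DE p n (fun _ => c) = c.
Proof. by elim: n => [|n IH] //=; rewrite !IH; ring. Qed.

Lemma DE_sum (I : Type) (r : seq I) p n (F : I -> (nat -> bool) -> R) :
  DE p n (fun t => \sum_(i <- r) F i t) = \sum_(i <- r) DE p n (F i).
Proof.
elim: r => [|i r IH].
  by rewrite big_nil (@DE_ext _ _ _ (fun _ => 0)) ?DE_cst // => t; rewrite big_nil.
rewrite big_cons -IH -DE_add; apply: DE_ext => t; by rewrite big_cons.
Qed.

Lemma DE_1 p n k : (k < n)%N -> DE p n (fun t => (t k)%:R) = p.
Proof.
elim: n => [//|n IH] kn /=.
have [e|ne] := eqVneq k n.
  subst; rewrite !DE_cst /= mulr1n mulr0n; ring.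
rewrite IH; first ring.
by rewrite ltn_neqAle ne -ltnS.
Qed.

Lemma DE_2 p n k j : (k < n)%N -> (j < n)%N ->
  DE p n (fun t => (t k)%:R * (t j)%:R) = if k == j then p else p ^+ 2.
Proof.
elim: n => [//|n IH] kn jn /=.
have [ek|nk] := eqVneq k n; have [ej|nj] := eqVneq j n.
- subst; rewrite eqxx !DE_cst /= ?mulr1n ?mulr0n; ring.
- subst.
  rewrite (@DE_ext _ _ (fun t => true%:R * (t j)%:R) (fun t => (t j)%:R)); last by move=> t /=; rewrite mulr1n mul1r.
  rewrite (@DE_ext _ _ (fun t => false%:R * (t j)%:R) (fun t => 0)); last by move=> t /=; rewrite mulr0n mul0r.
  rewrite DE_cst DE_1; last by rewrite ltn_neqAle nj -ltnS.
  rewrite eq_sym (negbTE nj); ring.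
- subst.
  rewrite (@DE_ext _ _ (fun t => (t k)%:R * true%:R) (fun t => (t k)%:R)); last by move=> t /=; rewrite mulr1n mulr1.
  rewrite (@DE_ext _ _ (fun t => (t k)%:R * false%:R) (fun t => 0)); last by move=> t /=; rewrite mulr0n mulr0.
  rewrite DE_cst DE_1; last by rewrite ltn_neqAle nk -ltnS.
  rewrite (negbTE nk); ring.
- rewrite IH; first (case: (k == j); ring).
  by rewrite ltn_neqAle nk -ltnS.
  by rewrite ltn_neqAle nj -ltnS.
Qed.

Lemma step_int (p A B : R) : 0 <= p <= 1 ->
  Rintegral (@lebesgue_measure R) `[0%R, 1%R]%classic (fun x => if x < p then A else B)
  = p * A + (1 - p) * B.
Proof.
move=> /andP[p0 p1].
have mf : measurable_fun setT (fun x : R => if x < p then A else B).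
  apply: measurable_fun_ifT => //.
  exact: measurable_fun_ltr.
rewrite /Rintegral (@itv_bndbnd_setU _ _ _ (BLeft p)) ?bnd_simp //.
rewrite integral_setU //=; last 2 first.
- by apply/measurable_EFinP; exact: measurable_funS mf.
- apply/disj_setPS => x [] /=; rewrite !in_itv /= => /andP[_ h1] /andP[h2 _].
  by move: h1; rewrite ltNge h2.
have E1 : (\int[@lebesgue_measure R]_(x in `[0%R, p[) (if x < p then A else B)%:E =
   \int[@lebesgue_measure R]_(x in `[0%R, p[) (cst A%:E) x)%E.
  by apply: eq_integral => x; rewrite inE /= in_itv /= => /andP[_ ->].
have E2 : (\int[@lebesgue_measure R]_(x in `[p, 1%R]) (if x < p then A else B)%:E =
   \int[@lebesgue_measure R]_(x in `[p, 1%R]) (cst B%:E) x)%E.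
  by apply: eq_integral => x; rewrite inE /= in_itv /= => /andP[h _]; rewrite ltNge h.
rewrite E1 E2.
rewrite !integral_cst //= !lebesgue_measure_itv /= !lte_fin.
case: (ltP 0 p) => hp; case: (ltP p 1) => hq /=.
- ring.
- have -> : p = 1 by lra.
  ring.
- have -> : p = 0 by lra.
  ring.
- lra.
Qed.

Lemma hashE_DE (p : R) n (g : (nat -> bool) -> R) : 0 <= p <= 1 ->
  hashE n (fun h => g (fun k => h k < p)) = DE p n g.
Proof.
move=> hp; elim: n g => [|n IH] g //=.
have -> : (fun x => hashE n (fun h => g (fun k => (if k == n then x else h k) < p))) =
  (fun x => if x < p then DE p n (fun t => g (fun k => if k == n then true else t k))
            else DE p n (fun t => g (fun k => if k == n then false else t k))).
  apply: funext => x.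
  transitivity (hashE n (fun h => (fun t => g (fun k => if k == n then x < p else t k)) (fun k => h k < p))).
    congr hashE; apply: funext => h; congr g; apply: funext => k; by case: (k == n).
  rewrite (IH (fun t => g (fun k => if k == n then x < p else t k))); by case: (x < p).
by rewrite step_int.
Qed.

End Aux.
Arguments DE {R} p n g.


Section Coin.
Variable R : realType.
Variable T : finType.
Variable q : R.

Lemma coinE_prod (f : T -> bool -> R) :
  coinE T q (fun c => \prod_t f t (c t)) = \prod_t (q * f t true + (1 - q) * f t false).
Proof.
rewrite /coinE /bweight.
transitivity (\sum_(c : {ffun T -> bool}) \prod_t ((if c t then q else 1 - q) * f t (c t))).
  by apply: eq_bigr => c _; rewrite big_split.
transitivity (\prod_t \sum_(b : bool) ((if b then q else 1 - q) * f t b)).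
  by rewrite bigA_distr_bigA.
by apply: eq_bigr => t _; rewrite big_bool.
Qed.

Lemma coinE_scale k (F : {ffun T -> bool} -> R) :
  coinE T q (fun c => k * F c) = k * coinE T q F.
Proof. rewrite /coinE mulr_sumr; apply: eq_bigr => c _; ring. Qed.

Lemma coinE_sum (I : Type) (r : seq I) (F : I -> {ffun T -> bool} -> R) :
  coinE T q (fun c => \sum_(i <- r) F i c) = \sum_(i <- r) coinE T q (F i).
Proof.
rewrite /coinE; under eq_bigr do rewrite mulr_sumr.
by rewrite exchange_big.
Qed.

Lemma prod_pick (F : T -> R) x : \prod_t (if t == x then F t else 1) = F x.
Proof. by rewrite -big_mkcond big_pred1_eq. Qed.

Lemma coinE_one x : coinE T q (fun c => (c x)%:R) = q.
Proof.
transitivity (coinE T q (fun c => \prod_t (if t == x then (c t)%:R else 1))).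
  by congr coinE; apply: funext => c; rewrite prod_pick.
rewrite (coinE_prod (fun t b => if t == x then b%:R else 1)).
transitivity (\prod_t (if t == x then q else 1)); last by rewrite prod_pick.
apply: eq_bigr => t _; case: (t == x) => /=; ring.
Qed.

Lemma coinE_two x y :
  coinE T q (fun c => (c x)%:R * (c y)%:R) = if x == y then q else q ^+ 2.
Proof.
transitivity (coinE T q (fun c => \prod_t ((if t == x then (c t)%:R else 1) *
                                         (if t == y then (c t)%:R else 1)))).
  by congr coinE; apply: funext => c; rewrite big_split /= !prod_pick.
rewrite (coinE_prod (fun t b => (if t == x then b%:R else 1) * (if t == y then b%:R else 1))).
have [e|ne] := eqVneq x y.
  subst; transitivity (\prod_t (if t == y then q else 1)); last by rewrite prod_pick.
  apply: eq_bigr => t _; case: (t == y) => /=; ring.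
transitivity (\prod_t ((if t == x then q else 1) * (if t == y then q else 1))).
  apply: eq_bigr => t _.
  have [->|tx] := eqVneq t x; first by rewrite (negbTE ne) /=; ring.
  case: (t == y) => /=; ring.
by rewrite big_split /= !prod_pick expr2.
Qed.

Lemma coinE_sum1 (I : finType) (k : I -> R) (f : I -> T) :
  coinE T q (fun c => \sum_i k i * (c (f i))%:R) = \sum_i k i * q.
Proof.
rewrite coinE_sum; apply: eq_bigr => i _; by rewrite coinE_scale coinE_one.
Qed.

Lemma coinE_sum2 (I J : finType) (k : I -> J -> R) (f : I -> T) (g : J -> T) :
  coinE T q (fun c => \sum_i \sum_j k i j * ((c (f i))%:R * (c (g j))%:R)) =
  \sum_i \sum_j k i j * (if f i == g j then q else q ^+ 2).
Proof.
rewrite coinE_sum; apply: eq_bigr => i _.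
rewrite coinE_sum; apply: eq_bigr => j _; by rewrite coinE_scale coinE_two.
Qed.

End Coin.

Section DEsum.
Variable R : realType.
Lemma DE_sum1 (p : R) n (I : finType) (k : I -> R) (f : I -> nat) :
  (forall i, (f i < n)%N) ->
  DE p n (fun t => \sum_i k i * (t (f i))%:R) = \sum_i k i * p.
Proof.
move=> hf; rewrite DE_sum; apply: eq_bigr => i _; by rewrite DE_scale DE_1.
Qed.

Lemma DE_sum2 (p : R) n (I J : finType) (k : I -> J -> R) (f : I -> nat) (g : J -> nat) :
  (forall i, (f i < n)%N) -> (forall j, (g j < n)%N) ->
  DE p n (fun t => \sum_i \sum_j k i j * ((t (f i))%:R * (t (g j))%:R)) =
  \sum_i \sum_j k i j * (if f i == g j then p else p ^+ 2).
Proof.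
move=> hf hg; rewrite DE_sum; apply: eq_bigr => i _.
rewrite DE_sum; apply: eq_bigr => j _; by rewrite DE_scale DE_2.
Qed.
End DEsum.


Section Count.
Variable R : realType.
Variable n : nat.

Lemma sum_tag (c : 'I_n -> nat) (F : 'I_n -> R) :
  \sum_(x : tuples c) F (tag x) = \sum_v (c v)%:R * F v.
Proof.
have := @sig_big_dep _ 0 +%R 'I_n (fun v => 'I_(c v)) predT (fun _ _ => true) (fun v _ => F v).
rewrite /= => e.
transitivity (\sum_(p : {v : 'I_n & 'I_(c v)} | true && true) F (tag p)); first by [].
rewrite -e; apply: eq_bigr => v _.
by rewrite sumr_const card_ord mulr_natl.
Qed.

Lemma sum_delta (T : finType) (x : T) (G : T -> R) :
  \sum_y (x == y)%:R * G y = G x.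
Proof.
rewrite (bigD1 x) //= eqxx mul1r big1 ?addr0 // => y yx.
by rewrite eq_sym (negbTE yx) mul0r.
Qed.

Lemma sum_delta' (T : finType) (x : T) (G : T -> R) :
  \sum_y G y * (y == x)%:R = G x.
Proof.
rewrite -[RHS](sum_delta _ x); apply: eq_bigr => y _; by rewrite eq_sym mulrC.
Qed.


Lemma sum_tag_delta (c : 'I_n -> nat) (u : 'I_n) (G : 'I_n -> R) :
  \sum_(y : tuples c) (u == tag y)%:R * G (tag y) = (c u)%:R * G u.
Proof.
rewrite (sum_tag c (fun w => (u == w)%:R * G w)).
rewrite -(sum_delta _ u (fun w => (c w)%:R * G w)).
by apply: eq_bigr => w _; ring.
Qed.

Lemma sum_tag_delta_c (c : 'I_n -> nat) (u : 'I_n) (K : R) :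
  \sum_(y : tuples c) (u == tag y)%:R * K = (c u)%:R * K.
Proof. exact: (sum_tag_delta c u (fun _ => K)). Qed.

Lemma Qsplit (T : eqType) (x y : T) (q : R) :
  (if x == y then q else q ^+ 2) = q ^+ 2 + (x == y)%:R * (q - q ^+ 2).
Proof. by case: (x == y) => /=; ring. Qed.

Variable b : 'I_n -> nat.

Lemma inner_y (u u' : 'I_n) (A B q2 : R) :
  \sum_(y : tuples b) \sum_(y' : tuples b)
     ((u == tag y)%:R * (u' == tag y')%:R * A * B * (q2 ^+ 2 + (y == y')%:R * (q2 - q2 ^+ 2)))
  = A * B * (q2 ^+ 2 * (b u)%:R * (b u')%:R + (q2 - q2 ^+ 2) * (u == u')%:R * (b u)%:R).
Proof.
set r2 := q2 - q2 ^+ 2.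
transitivity (\sum_(y : tuples b) \sum_(y' : tuples b) ((u == tag y)%:R * ((u' == tag y')%:R * (A * B * q2 ^+ 2)))
   + \sum_(y : tuples b) \sum_(y' : tuples b) ((y == y')%:R * ((u == tag y)%:R * (u' == tag y')%:R * A * B * r2))).
  rewrite -big_split; apply: eq_bigr => y _; rewrite -big_split; apply: eq_bigr => y' _ /=; ring.
have P2 : \sum_(y : tuples b) \sum_(y' : tuples b)
        ((y == y')%:R * ((u == tag y)%:R * (u' == tag y')%:R * A * B * r2))
        = (b u)%:R * ((u' == u)%:R * A * B * r2).
  under eq_bigr => y _ do rewrite sum_delta.
  have e := sum_tag_delta b u (fun w => (u' == w)%:R * A * B * r2); cbv beta in e.
  rewrite -e; apply: eq_bigr => y _; ring.
have P1 : \sum_(y : tuples b) \sum_(y' : tuples b)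
      ((u == tag y)%:R * ((u' == tag y')%:R * (A * B * q2 ^+ 2)))
      = (b u)%:R * ((b u')%:R * (A * B * q2 ^+ 2)).
  under eq_bigr => y _ do rewrite -mulr_sumr sum_tag_delta_c.
  by rewrite sum_tag_delta_c.
rewrite P1 P2 eq_sym; ring.
Qed.


Lemma sum_tag2 (c : 'I_n -> nat) (F : 'I_n -> 'I_n -> R) :
  \sum_(x : tuples c) \sum_(x' : tuples c) F (tag x) (tag x') =
  \sum_v \sum_v' ((c v)%:R * (c v')%:R * F v v').
Proof.
under eq_bigr => x _ do rewrite (sum_tag c (F (tag x))).
have e := sum_tag c (fun v => \sum_v' (c v')%:R * F v v'); cbv beta in e; rewrite e.
apply: eq_bigr => v _; rewrite big_distrr /=; apply: eq_bigr => v' _; ring.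
Qed.

Variable a : 'I_n -> nat.

Definition Hf (m q2 : R) (v v' : 'I_n) : R :=
  (m ^+ 2 + (v == v')%:R * (m - m ^+ 2)) *
  (q2 ^+ 2 * (b v)%:R * (b v')%:R + (q2 - q2 ^+ 2) * (v == v')%:R * (b v)%:R).

Lemma count4_aux (m q1 q2 : R) :
 \sum_(x : tuples a) \sum_(y : tuples b) \sum_(x' : tuples a) \sum_(y' : tuples b)
   ((tag x == tag y)%:R * (tag x' == tag y')%:R * (if tag x == tag x' then m else m ^+ 2)
    * (if x == x' then q1 else q1 ^+ 2) * (if y == y' then q2 else q2 ^+ 2))
 = q1 ^+ 2 * (m ^+ 2 * q2 ^+ 2 * gamma a b 1 1 ^+ 2 + m * (q2 - q2 ^+ 2) * gamma a b 2 1
              + (m - m ^+ 2) * q2 ^+ 2 * gamma a b 2 2)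
   + (q1 - q1 ^+ 2) * (m * q2 ^+ 2 * gamma a b 1 2 + m * (q2 - q2 ^+ 2) * gamma a b 1 1).
Proof.
under eq_bigr => x _ do under eq_bigr => y _ do under eq_bigr => x' _ do
  under eq_bigr => y' _ do rewrite !Qsplit.
under eq_bigr => x _ do rewrite exchange_big.
under eq_bigr => x _ do under eq_bigr => x' _ do rewrite inner_y.
transitivity (\sum_(x : tuples a) \sum_(x' : tuples a) (q1 ^+ 2 * Hf m q2 (tag x) (tag x'))
  + \sum_(x : tuples a) \sum_(x' : tuples a) ((x == x')%:R * ((q1 - q1 ^+ 2) * Hf m q2 (tag x) (tag x')))).
  rewrite -big_split; apply: eq_bigr => x _; rewrite -big_split; apply: eq_bigr => x' _ /=.
  rewrite /Hf; ring.
under [X in _ + X]eq_bigr => x _ do rewrite sum_delta.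
have e := sum_tag2 a (fun v v' => q1 ^+ 2 * Hf m q2 v v'); cbv beta in e; rewrite e; clear e.
have e := sum_tag a (fun v => (q1 - q1 ^+ 2) * Hf m q2 v v); cbv beta in e; rewrite e; clear e.
have G2 : \sum_v \sum_v' ((a v)%:R * (a v')%:R * (q1 ^+ 2 * (m ^+ 2 * q2 ^+ 2 * (b v)%:R * (b v')%:R)))
   = q1 ^+ 2 * (m ^+ 2 * q2 ^+ 2 * gamma a b 1 1 ^+ 2).
  rewrite [gamma a b 1 1 ^+ 2]expr2 /gamma big_distrl /= !mulr_sumr; apply: eq_bigr => v _.
  rewrite big_distrr /= !mulr_sumr; apply: eq_bigr => v' _; ring.
have S1 : \sum_v \sum_v' ((a v)%:R * (a v')%:R * (q1 ^+ 2 * Hf m q2 v v'))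
   = q1 ^+ 2 * (m ^+ 2 * q2 ^+ 2 * gamma a b 1 1 ^+ 2)
     + \sum_v ((a v)%:R * (a v)%:R * q1 ^+ 2 * (m * (q2 - q2 ^+ 2) * (b v)%:R + (m - m ^+ 2) * q2 ^+ 2 * (b v)%:R ^+ 2)).
  rewrite -G2.
  transitivity (\sum_v \sum_v' ((a v)%:R * (a v')%:R * (q1 ^+ 2 * (m ^+ 2 * q2 ^+ 2 * (b v)%:R * (b v')%:R)))
    + \sum_v \sum_v' ((v == v')%:R * ((a v)%:R * (a v')%:R * q1 ^+ 2 * (m * (q2 - q2 ^+ 2) * (b v)%:R + (m - m ^+ 2) * q2 ^+ 2 * (b v)%:R ^+ 2)))).
    rewrite -big_split; apply: eq_bigr => v _; rewrite -big_split; apply: eq_bigr => v' _ /=.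
    rewrite /Hf; have [<-|ne] := eqVneq v v'; rewrite /= ?mulr1n ?mulr0n; ring.
  congr (_ + _); apply: eq_bigr => v _; by rewrite sum_delta.
rewrite S1.
have L : \sum_v ((a v)%:R * (a v)%:R * q1 ^+ 2 * (m * (q2 - q2 ^+ 2) * (b v)%:R + (m - m ^+ 2) * q2 ^+ 2 * (b v)%:R ^+ 2))
   + \sum_v (a v)%:R * ((q1 - q1 ^+ 2) * Hf m q2 v v)
   = q1 ^+ 2 * (m * (q2 - q2 ^+ 2) * gamma a b 2 1 + (m - m ^+ 2) * q2 ^+ 2 * gamma a b 2 2)
     + (q1 - q1 ^+ 2) * (m * q2 ^+ 2 * gamma a b 1 2 + m * (q2 - q2 ^+ 2) * gamma a b 1 1).
  rewrite /gamma /Hf !mulrDr !mulr_sumr -!big_split; apply: eq_bigr => v _ /=.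
  rewrite eqxx /= ?mulr1n; ring.
rewrite -addrA L; ring.
Qed.


Lemma count4 (m q1 q2 : R) :
 \sum_(x : tuples a) \sum_(y : tuples b) \sum_(x' : tuples a) \sum_(y' : tuples b)
   (((tag x == tag y)%:R * (tag x' == tag y')%:R * (if y == y' then q2 else q2 ^+ 2)
    * (if x == x' then q1 else q1 ^+ 2)) * (if tag x == tag x' then m else m ^+ 2))
 = q1 ^+ 2 * (m ^+ 2 * q2 ^+ 2 * gamma a b 1 1 ^+ 2 + m * (q2 - q2 ^+ 2) * gamma a b 2 1
              + (m - m ^+ 2) * q2 ^+ 2 * gamma a b 2 2)
   + (q1 - q1 ^+ 2) * (m * q2 ^+ 2 * gamma a b 1 2 + m * (q2 - q2 ^+ 2) * gamma a b 1 1).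
Proof.
rewrite -count4_aux; apply: eq_bigr => x _; apply: eq_bigr => y _;
  apply: eq_bigr => x' _; apply: eq_bigr => y' _; ring.
Qed.

Lemma count1 :
  \sum_(x : tuples a) \sum_(y : tuples b) ((tag x == tag y)%:R : R) = gamma a b 1 1.
Proof.
transitivity (\sum_(x : tuples a) ((b (tag x))%:R : R)).
  apply: eq_bigr => x _; rewrite -[RHS]mulr1 -sum_tag_delta_c.
  by apply: eq_bigr => y _; rewrite mulr1.
have e := sum_tag a (fun v => ((b v)%:R : R)); cbv beta in e; rewrite e.
rewrite /gamma; apply: eq_bigr => v _; ring.
Qed.

End Count.


Section Main.
Variable R : realType.
Variable n : nat.
Variables a b : 'I_n -> nat.

Lemma join_sum (p1 p2 : R) h c1 c2 :
 ((joinsize a b (ubs a p1 h c1) (ubs b p2 h c2))%:R : R) =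
 \sum_(i : tuples a * tuples b) ((tag i.1 == tag i.2)%:R * ((h (val (tag i.1)) < Num.min p1 p2)%R)%:R)
     * ((c1 i.1)%:R * (c2 i.2)%:R).
Proof.
rewrite /joinsize -sum1_card natr_sum big_mkcond /=.
apply: eq_bigr => -[x y] _ /=; rewrite !inE /=.
have [e|ne] := eqVneq (tag x) (tag y).
  rewrite -e lt_min.
  case: (h _ < p1); case: (h _ < p2); case: (c1 x); case: (c2 y);
    rewrite /= ?mulr1n ?mulr0n; ring.
by rewrite !andbF /= mul0r mul0r.
Qed.


Lemma E1 (p1 q1 p2 q2 : R) : 0 <= Num.min p1 p2 <= 1 ->
  ubsE a b q1 q2 (fun h c1 c2 => Jcount a b p1 q1 p2 q2 h c1 c2) =
  \sum_(i : tuples a * tuples b)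
     ((Num.min p1 p2 * q1 * q2)^-1 * (tag i.1 == tag i.2)%:R * q2 * q1) * Num.min p1 p2.
Proof.
move=> hm.
set m := Num.min p1 p2.
set dv := m * q1 * q2.
rewrite /ubsE.
transitivity (hashE n (fun h => \sum_(i : tuples a * tuples b)
     (dv^-1 * (tag i.1 == tag i.2)%:R * q2 * q1) * ((h (val (tag i.1)) < m)%R)%:R)).
  congr hashE; apply: funext => h /=.
  transitivity (coinE (tuples a) q1 (fun c1 => \sum_(i : tuples a * tuples b)
     (dv^-1 * ((tag i.1 == tag i.2)%:R * ((h (val (tag i.1)) < m)%R)%:R) * q2) * (c1 i.1)%:R)).
    congr coinE; apply: funext => c1.
    transitivity (coinE (tuples b) q2 (fun c2 => \sum_(i : tuples a * tuples b)
     (dv^-1 * ((tag i.1 == tag i.2)%:R * ((h (val (tag i.1)) < m)%R)%:R) * (c1 i.1)%:R) * (c2 i.2)%:R)).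
      congr coinE; apply: funext => c2.
      rewrite /Jcount join_sum mulrC big_distrr /=; apply: eq_bigr => i _; ring.
    rewrite coinE_sum1; apply: eq_bigr => i _; ring.
  rewrite coinE_sum1; apply: eq_bigr => i _; ring.
have e := @hashE_DE R m n (fun t => \sum_(i : tuples a * tuples b)
     (dv^-1 * (tag i.1 == tag i.2)%:R * q2 * q1) * (t (val (tag i.1)))%:R) hm.
cbv beta in e; rewrite e.
rewrite DE_sum1 // => i.
exact: ltn_ord.
Qed.


Lemma E2 (p1 q1 p2 q2 : R) : 0 <= Num.min p1 p2 <= 1 ->
  ubsE a b q1 q2 (fun h c1 c2 => (Jcount a b p1 q1 p2 q2 h c1 c2) ^+ 2) =
  \sum_(i : tuples a * tuples b) \sum_(j : tuples a * tuples b)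
     ((Num.min p1 p2 * q1 * q2)^-1 ^+ 2 * (tag i.1 == tag i.2)%:R * (tag j.1 == tag j.2)%:R
      * (if i.2 == j.2 then q2 else q2 ^+ 2) * (if i.1 == j.1 then q1 else q1 ^+ 2))
     * (if val (tag i.1) == val (tag j.1) then Num.min p1 p2 else Num.min p1 p2 ^+ 2).
Proof.
move=> hm.
set m := Num.min p1 p2.
set dv := m * q1 * q2.
rewrite /ubsE.
transitivity (hashE n (fun h => \sum_(i : tuples a * tuples b) \sum_(j : tuples a * tuples b)
     (dv^-1 ^+ 2 * (tag i.1 == tag i.2)%:R * (tag j.1 == tag j.2)%:R
      * (if i.2 == j.2 then q2 else q2 ^+ 2) * (if i.1 == j.1 then q1 else q1 ^+ 2))
     * (((h (val (tag i.1)) < m)%R)%:R * ((h (val (tag j.1)) < m)%R)%:R))).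
  congr hashE; apply: funext => h.
  transitivity (coinE (tuples a) q1 (fun c1 => \sum_(i : tuples a * tuples b) \sum_(j : tuples a * tuples b)
     (dv^-1 ^+ 2 * ((tag i.1 == tag i.2)%:R * ((h (val (tag i.1)) < m)%R)%:R)
       * ((tag j.1 == tag j.2)%:R * ((h (val (tag j.1)) < m)%R)%:R)
       * (if i.2 == j.2 then q2 else q2 ^+ 2)) * ((c1 i.1)%:R * (c1 j.1)%:R))).
    congr coinE; apply: funext => c1.
    transitivity (coinE (tuples b) q2 (fun c2 => \sum_(i : tuples a * tuples b) \sum_(j : tuples a * tuples b)
     (dv^-1 ^+ 2 * ((tag i.1 == tag i.2)%:R * ((h (val (tag i.1)) < m)%R)%:R)
       * ((tag j.1 == tag j.2)%:R * ((h (val (tag j.1)) < m)%R)%:R)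
       * ((c1 i.1)%:R * (c1 j.1)%:R)) * ((c2 i.2)%:R * (c2 j.2)%:R))).
      congr coinE; apply: funext => c2.
      rewrite /Jcount join_sum -/m -/dv.
      set S := (X in (X / _) ^+ 2 = _).
      transitivity (dv^-1 ^+ 2 * (S * S)); first by ring.
      rewrite /S mulr_suml mulr_sumr; apply: eq_bigr => i _.
      rewrite mulr_sumr mulr_sumr; apply: eq_bigr => j _; ring.
    rewrite coinE_sum2; apply: eq_bigr => i _; apply: eq_bigr => j _; cbv beta; ring.
  rewrite coinE_sum2; apply: eq_bigr => i _; apply: eq_bigr => j _; cbv beta; ring.
have e := @hashE_DE R m n (fun t => \sum_(i : tuples a * tuples b) \sum_(j : tuples a * tuples b)
     (dv^-1 ^+ 2 * (tag i.1 == tag i.2)%:R * (tag j.1 == tag j.2)%:R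
      * (if i.2 == j.2 then q2 else q2 ^+ 2) * (if i.1 == j.1 then q1 else q1 ^+ 2))
     * ((t (val (tag i.1)))%:R * (t (val (tag j.1)))%:R)) hm.
cbv beta in e; rewrite e.
rewrite DE_sum2 // => i; exact: ltn_ord.
Qed.


Lemma sum_pair (G : tuples a * tuples b -> R) :
  \sum_(i : tuples a * tuples b) G i = \sum_(x : tuples a) \sum_(y : tuples b) G (x, y).
Proof. by rewrite pair_bigA; apply: eq_bigr => -[x y] _. Qed.

Lemma E1v (p1 q1 p2 q2 : R) : 0 < Num.min p1 p2 <= 1 -> q1 != 0 -> q2 != 0 ->
  ubsE a b q1 q2 (fun h c1 c2 => Jcount a b p1 q1 p2 q2 h c1 c2) = gamma a b 1 1.
Proof.
move=> /andP[m0 m1] hq1 hq2.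
have m0' : Num.min p1 p2 != 0 by rewrite gt_eqF.
rewrite E1; last by rewrite ltW.
rewrite (eq_bigr (fun i => (tag i.1 == tag i.2)%:R)); last first.
  by move=> i _; field; rewrite hq1 hq2 m0'.
rewrite sum_pair; exact: count1.
Qed.

Lemma E2v (p1 q1 p2 q2 : R) : 0 < Num.min p1 p2 <= 1 ->
  ubsE a b q1 q2 (fun h c1 c2 => (Jcount a b p1 q1 p2 q2 h c1 c2) ^+ 2) =
  (Num.min p1 p2 * q1 * q2)^-1 ^+ 2 *
  (q1 ^+ 2 * (Num.min p1 p2 ^+ 2 * q2 ^+ 2 * gamma a b 1 1 ^+ 2
      + Num.min p1 p2 * (q2 - q2 ^+ 2) * gamma a b 2 1
      + (Num.min p1 p2 - Num.min p1 p2 ^+ 2) * q2 ^+ 2 * gamma a b 2 2)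
   + (q1 - q1 ^+ 2) * (Num.min p1 p2 * q2 ^+ 2 * gamma a b 1 2
      + Num.min p1 p2 * (q2 - q2 ^+ 2) * gamma a b 1 1)).
Proof.
move=> /andP[m0 m1].
rewrite E2; last by rewrite ltW.
transitivity ((Num.min p1 p2 * q1 * q2)^-1 ^+ 2 *
  \sum_(i : tuples a * tuples b) \sum_(j : tuples a * tuples b)
     ((tag i.1 == tag i.2)%:R * (tag j.1 == tag j.2)%:R
      * (if i.2 == j.2 then q2 else q2 ^+ 2) * (if i.1 == j.1 then q1 else q1 ^+ 2))
     * (if val (tag i.1) == val (tag j.1) then Num.min p1 p2 else Num.min p1 p2 ^+ 2)).
  rewrite mulr_sumr; apply: eq_bigr => i _; rewrite mulr_sumr; apply: eq_bigr => j _; ring.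
congr (_ * _).
rewrite sum_pair.
under eq_bigr => x _ do under eq_bigr => y _ do rewrite sum_pair.
rewrite -count4; apply: eq_bigr => x _; apply: eq_bigr => y _;
  apply: eq_bigr => x' _; apply: eq_bigr => y' _.
by rewrite val_eqE.
Qed.

Lemma var_closed (p1 q1 p2 q2 : R) : 0 < Num.min p1 p2 <= 1 -> q1 != 0 -> q2 != 0 ->
  var_Jcount a b p1 q1 p2 q2 =
  (gamma a b 2 2 + (q1^-1 - 1) * gamma a b 1 2 + (q2^-1 - 1) * gamma a b 2 1
   + (q1^-1 - 1) * (q2^-1 - 1) * gamma a b 1 1) / Num.min p1 p2 - gamma a b 2 2.
Proof.
move=> hm hq1 hq2.
have m0 : Num.min p1 p2 != 0 by case/andP: hm => h _; rewrite gt_eqF.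
rewrite /var_Jcount E2v // E1v //.
by field; rewrite m0 hq1 hq2.
Qed.

End Main.


Section Scalar.
Variable R : realType.

Lemma Nmono (c B1 B2 g x1 x2 y1 y2 : R) : 0 <= B1 -> 0 <= B2 -> 0 <= g ->
  0 <= y1 <= x1 -> 0 <= y2 <= x2 ->
  c + y1 * B1 + y2 * B2 + y1 * y2 * g <= c + x1 * B1 + x2 * B2 + x1 * x2 * g.
Proof.
move=> hB1 hB2 hg /andP[y10 yx1] /andP[y20 yx2].
have t1 : 0 <= (x1 - y1) * B1 by rewrite mulr_ge0 // subr_ge0.
have t2 : 0 <= (x2 - y2) * B2 by rewrite mulr_ge0 // subr_ge0.
have t3 : 0 <= g * (x1 * (x2 - y2)) by rewrite !mulr_ge0 ?subr_ge0 //; lra.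
have t4 : 0 <= g * (y2 * (x1 - y1)) by rewrite !mulr_ge0 ?subr_ge0.
lra.
Qed.


Definition Nf (c B1 B2 g x1 x2 : R) := c + x1 * B1 + x2 * B2 + x1 * x2 * g.

Lemma scalar_ineq (c B1 B2 g e1 e2 p1 p2 : R) :
  0 <= c -> 0 <= B1 -> 0 <= B2 -> 0 < g -> 0 < e1 <= 1 -> 0 < e2 <= 1 ->
  e1 <= p1 <= 1 -> e2 <= p2 <= 1 ->
  Nf c B1 B2 g (Num.min 1 (Num.max e1 (Num.max e2 (Num.sqrt (e1 * e2 * c / g)))) / e1)
     (Num.min 1 (Num.max e1 (Num.max e2 (Num.sqrt (e1 * e2 * c / g)))) / e2)
   / Num.min 1 (Num.max e1 (Num.max e2 (Num.sqrt (e1 * e2 * c / g))))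
  <= Nf c B1 B2 g (p1 / e1) (p2 / e2) / Num.min p1 p2.
Proof.
move=> hc hB1 hB2 hg /andP[e10 e11] /andP[e20 e21] /andP[hp1 hp1'] /andP[hp2 hp2'].
set s := Num.sqrt _.
set P := Num.min 1 _.
set N := Nf c B1 B2 g.
have hs0 : 0 <= s := sqrtr_ge0 _.
have hs2 : s ^+ 2 = e1 * e2 * c / g.
  by rewrite sqr_sqrtr // divr_ge0 // ?mulr_ge0 // ltW.
have e1n : e1 != 0 by rewrite gt_eqF.
have e2n : e2 != 0 by rewrite gt_eqF.
have gn : g != 0 by rewrite gt_eqF.
pose D := g / (e1 * e2).
have hD : 0 < D by rewrite divr_gt0 // mulr_gt0.
have hDs : D * s ^+ 2 = c by rewrite hs2 /D; field; rewrite e1n e2n gn.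
have P1 : P <= 1 by rewrite /P ge_min lexx.
have Pe1 : e1 <= P by rewrite /P le_min e11 le_max lexx.
have Pe2 : e2 <= P by rewrite /P le_min e21 !le_max lexx orbT.
have F2 : P = 1 \/ s <= P.
  case: (lerP s 1) => h.
    by right; rewrite /P le_min h !le_max lexx !orbT.
  left; rewrite /P min_l // !le_max; apply/orP; right; apply/orP; right; exact: ltW.
have F3 : P <= e1 \/ P <= e2 \/ P <= s.
  have : P <= Num.max e1 (Num.max e2 s) by rewrite /P ge_min lexx orbT.
  by rewrite !le_max => /orP[->|/orP[->|->]]; auto.
have P0 : 0 < P by exact: lt_le_trans e10 Pe1.
have Gform : forall y, 0 < y -> N (y / e1) (y / e2) / y = c / y + B1 / e1 + B2 / e2 + D * y.
  move=> y hy; have yn : y != 0 by rewrite gt_eqF.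
  by rewrite /N /Nf /D; field; rewrite e1n e2n yn.
have stepB : forall y, e1 <= y -> e2 <= y -> y <= 1 ->
    N (P / e1) (P / e2) / P <= N (y / e1) (y / e2) / y.
  move=> y h1 h2 h3.
  have y0 : 0 < y by exact: lt_le_trans e10 h1.
  have yn : y != 0 by rewrite gt_eqF.
  have Pn : P != 0 by rewrite gt_eqF.
  rewrite !Gform //.
  suff : 0 <= (c / y + D * y) - (c / P + D * P) by lra.
  have -> : (c / y + D * y) - (c / P + D * P) = (y - P) * (D * y * P - c) / (y * P).
    by field; rewrite yn Pn.
  apply: divr_ge0; last by rewrite mulr_ge0 // ltW.
  case: (leP P y) => hyP.
    case: F2 => [HP|hsP].
      have -> : y - P = 0 by lra.
      by rewrite mul0r.
    apply: mulr_ge0; first by rewrite subr_ge0.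
    rewrite subr_ge0 -hDs.
    have : s ^+ 2 <= y * P.
      rewrite expr2; apply: ler_pM => //.
      exact: le_trans hsP hyP.
    move=> h; rewrite -mulrA; apply: ler_wpM2l => //; exact: ltW.
  have hPs : P <= s.
    case: F3 => [h|[h|h]] //; lra.
  apply: mulr_le0; first by rewrite subr_le0 ltW.
  rewrite subr_le0 -hDs -mulrA; apply: ler_wpM2l; first exact: ltW.
  rewrite expr2; apply: ler_pM; [exact: ltW|exact: ltW| |exact: hPs].
  exact: le_trans (ltW hyP) hPs.
pose m := Num.min p1 p2.
have mp1 : m <= p1 by rewrite /m ge_min lexx.
have mp2 : m <= p2 by rewrite /m ge_min lexx orbT.
have hm1 : m <= 1 by exact: le_trans mp1 hp1'.
have p10 : 0 < p1 by exact: lt_le_trans e10 hp1.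
have p20 : 0 < p2 by exact: lt_le_trans e20 hp2.
have m0 : 0 < m by rewrite /m lt_min p10 p20.
have e1i : 0 < e1^-1 by rewrite invr_gt0.
have e2i : 0 < e2^-1 by rewrite invr_gt0.
rewrite -/m.
case: (leP e1 m) => hme1; case: (leP e2 m) => hme2.
- apply: le_trans (stepB m hme1 hme2 hm1) _.
  apply: ler_wpM2r; first by rewrite invr_ge0 ltW.
  apply: Nmono => //; [exact: ltW| |].
  + apply/andP; split; first by rewrite divr_ge0 // ltW.
    by apply: ler_wpM2r => //; exact: ltW.
  + apply/andP; split; first by rewrite divr_ge0 // ltW.
    by apply: ler_wpM2r => //; exact: ltW.
-
  have em : m = p1.
    have : m < p2 by exact: lt_le_trans hme2 hp2.
    by rewrite /m gt_min ltxx orbF => h; rewrite min_l // ltW.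
  have he12 : e1 <= e2 by apply: le_trans hme1 (ltW hme2).
  apply: le_trans (stepB e2 he12 (lexx _) e21) _.
  rewrite em.
  have p1n : p1 != 0 by rewrite gt_eqF.
  apply: (@le_trans _ _ (N (p1 / e1) 1 / p1)).
    rewrite Gform // -em.
    rewrite (_ : N (m / e1) 1 / m = (c + B2) / m + (B1 + g) / e1); last first.
      by rewrite /N /Nf; field; rewrite e1n gt_eqF.
    rewrite /D (_ : c / e2 + B1 / e1 + B2 / e2 + g / (e1 * e2) * e2 =
                    (c + B2) / e2 + (B1 + g) / e1); last by field; rewrite e1n e2n.
    rewrite lerD2r; apply: ler_wpM2l; first by rewrite addr_ge0.
    by rewrite lef_pV2 // ?posrE // ltW.
  apply: ler_wpM2r; first by rewrite invr_ge0 ltW.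
  apply: Nmono => //; [exact: ltW| |].
  + by rewrite lexx andbT divr_ge0 // ltW.
  + apply/andP; split => //.
    by rewrite ler_pdivlMr // mul1r.
-
  have em : m = p2.
    have : m < p1 by exact: lt_le_trans hme1 hp1.
    by rewrite /m gt_min ltxx /= => h; rewrite min_r // ltW.
  have he21 : e2 <= e1 by apply: le_trans hme2 (ltW hme1).
  apply: le_trans (stepB e1 (lexx _) he21 e11) _.
  rewrite em.
  apply: (@le_trans _ _ (N 1 (p2 / e2) / p2)).
    rewrite Gform // -em.
    rewrite (_ : N 1 (m / e2) / m = (c + B1) / m + (B2 + g) / e2); last first.
      by rewrite /N /Nf; field; rewrite e2n gt_eqF.
    rewrite /D (_ : c / e1 + B1 / e1 + B2 / e2 + g / (e1 * e2) * e1 =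
                    (c + B1) / e1 + (B2 + g) / e2); last by field; rewrite e1n e2n.
    rewrite lerD2r; apply: ler_wpM2l; first by rewrite addr_ge0.
    by rewrite lef_pV2 // ?posrE // ltW.
  apply: ler_wpM2r; first by rewrite invr_ge0 ltW.
  apply: Nmono => //; [exact: ltW| |].
  + apply/andP; split => //.
    by rewrite ler_pdivlMr // mul1r.
  + by rewrite lexx andbT divr_ge0 // ltW.
- exfalso; move: hme1 hme2; rewrite /m.
  by case: (leP p1 p2) => h; lra.
Qed.

End Scalar.


Lemma natsq_ge0 (R : realType) (k : nat) : 0 <= (k%:R : R) * (k%:R - 1).
Proof.
case: k => [|k]; first by rewrite mul0r.
by rewrite -natr1 addrK mulr_ge0 // addr_ge0.
Qed.

Lemma gamma_facts (R : realType) n (a b : 'I_n -> nat) :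
  [/\ 0 <= gamma (R:=R) a b 2 2 - gamma a b 1 2 - gamma a b 2 1 + gamma a b 1 1,
      0 <= gamma (R:=R) a b 1 2 - gamma a b 1 1 &
      0 <= gamma (R:=R) a b 2 1 - gamma a b 1 1].
Proof.
split.
- rewrite /gamma -!sumrB -big_split /=; apply: sumr_ge0 => v _.
  rewrite (_ : _ + _ = ((a v)%:R * ((a v)%:R - 1)) * ((b v)%:R * ((b v)%:R - 1))); last by ring.
  by rewrite mulr_ge0 // natsq_ge0.
- rewrite /gamma -!sumrB; apply: sumr_ge0 => v _.
  rewrite (_ : _ - _ = (a v)%:R * ((b v)%:R * ((b v)%:R - 1))); last by ring.
  by rewrite mulr_ge0 // natsq_ge0.
- rewrite /gamma -!sumrB; apply: sumr_ge0 => v _.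
  rewrite (_ : _ - _ = (b v)%:R * ((a v)%:R * ((a v)%:R - 1))); last by ring.
  by rewrite mulr_ge0 // natsq_ge0.
Qed.

Theorem theorem5 (R : realType) (n : nat) (a b : 'I_n -> nat) (e1 e2 : R) :
  0 < gamma (R:=R) a b 1 1 ->
  0 < e1 <= 1 -> 0 < e2 <= 1 ->
  let p := popt a b e1 e2 in
  [/\ 0 < p <= 1, 0 < e1 / p <= 1, 0 < e2 / p <= 1 &
      forall p1 q1 p2 q2 : R,
        0 < p1 <= 1 -> 0 < q1 <= 1 -> 0 < p2 <= 1 -> 0 < q2 <= 1 ->
        p1 * q1 = e1 -> p2 * q2 = e2 ->
        var_Jcount a b p (e1 / p) p (e2 / p) <= var_Jcount a b p1 q1 p2 q2].
Proof.
move=> hg he1 he2 p.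
case/andP: (he1) => e10 e11; case/andP: (he2) => e20 e21.
have P1 : p <= 1 by rewrite /p /popt ge_min lexx.
have Pe1 : e1 <= p by rewrite /p /popt le_min e11 le_max lexx.
have Pe2 : e2 <= p by rewrite /p /popt le_min e21 !le_max lexx orbT.
have P0 : 0 < p by exact: lt_le_trans e10 Pe1.
have pn : p != 0 by rewrite gt_eqF.
have e1n : e1 != 0 by rewrite gt_eqF.
have e2n : e2 != 0 by rewrite gt_eqF.
have q1o : 0 < e1 / p <= 1 by rewrite divr_gt0 // ler_pdivrMr // mul1r.
have q2o : 0 < e2 / p <= 1 by rewrite divr_gt0 // ler_pdivrMr // mul1r.
split; [by rewrite P0 P1 | exact: q1o | exact: q2o | ].
move=> p1 q1 p2 q2 /andP[p10 p11] /andP[q10 q11] /andP[p20 p21] /andP[q20 q21] E1 E2.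
have q1n : q1 != 0 by rewrite gt_eqF.
have q2n : q2 != 0 by rewrite gt_eqF.
have p1n : p1 != 0 by rewrite gt_eqF.
have p2n : p2 != 0 by rewrite gt_eqF.
have hm : 0 < Num.min p1 p2 <= 1.
  by rewrite lt_min p10 p20 /= ge_min p11.
have hpp : 0 < Num.min p p <= 1 by rewrite minxx P0 P1.
have hq1' : e1 / p != 0 by case/andP: q1o => h _; rewrite gt_eqF.
have hq2' : e2 / p != 0 by case/andP: q2o => h _; rewrite gt_eqF.
rewrite (@var_closed R n a b p (e1 / p) p (e2 / p) hpp hq1' hq2') (@var_closed R n a b p1 q1 p2 q2 hm q1n q2n).
rewrite minxx !invf_div.
have -> : q1^-1 = p1 / e1 by rewrite -E1; field; rewrite p1n q1n.
have -> : q2^-1 = p2 / e2 by rewrite -E2; field; rewrite p2n q2n.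
case: (gamma_facts R n a b) => hC hB1 hB2.
have hp1 : e1 <= p1 by rewrite -E1 ler_piMr // ltW.
have hp2 : e2 <= p2 by rewrite -E2 ler_piMr // ltW.
have := @scalar_ineq R _ _ _ _ e1 e2 p1 p2 hC hB1 hB2 hg he1 he2
  (introT andP (conj hp1 p11)) (introT andP (conj hp2 p21)).
rewrite /Nf -/(popt a b e1 e2) -/p => H.
rewrite lerD2r.
set g11 := gamma a b 1 1 in H *.
set g12 := gamma a b 1 2 in H *.
set g21 := gamma a b 2 1 in H *.
set g22 := gamma a b 2 2 in H *.
move: H.
have F : forall x1 x2, g22 + (x1 - 1) * g12 + (x2 - 1) * g21 + (x1 - 1) * (x2 - 1) * g11
   = (g22 - g12 - g21 + g11) + x1 * (g12 - g11) + x2 * (g21 - g11) + x1 * x2 * g11.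
  by move=> x1 x2; ring.
by rewrite !F.
Qed.
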